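(* For every $r \geqslant 4$ there exists $C(r) > 0$ such that the following holds. If $n \in \mathbb{N}$ and $p > 0$ satisfy $p\, n^{1/\lambda(r)} \log n \leqslant 1/(2\mathrm{e})$, and $n$ is sufficiently large, then $$\mathbb{E}\big(Y_m(uv)\big) \,\leqslant\, \left(\frac{m + C(r)}{2\binom{r}{2}\log n}\right)^{m - \lambda(r)}$$ for every edge $uv \in E(K_n)$ and every $m$ with $\lambda(r) + 1 \leqslant m \leqslant \binom{r}{2}\log n$.
   Context: $\lambda(r) = \frac{\binom{r}{2}-2}{r-2}$ and $\mathrm{e}$ is Euler's number. $G_{n,p}$ is the Erdős–Rényi random graph on $[n]$. For $m \in \mathbb{N}$ and $uv \in E(K_n)$, $Y_m(uv)$ is the number of subgraphs $F \subset G_{n,p}$ whose vertex set contains $u$ and $v$ and which satisfy $e(F) = m \geqslant \lambda(r)\big(v(F)-2\big) + 1$. *)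

(* Defs.v *)
From HB Require Import structures.
From mathcomp Require Import all_boot all_order all_algebra.
From mathcomp Require Import all_classical all_reals all_analysis.
Set Implicit Arguments. Unset Strict Implicit. Unset Printing Implicit Defensive.
Import Order.TTheory GRing.Theory Num.Theory.
Local Open Scope ring_scope.

Definition lambda (R : realType) (r : nat) : R :=
  (('C(r, 2))%:R - 2) / (r%:R - 2).

Definition KnE (n : nat) : {set {set 'I_n}} := [set e : {set 'I_n} | #|e| == 2%N].

(* A graph on 'I_n is a set of edges G \subset KnE n.  The Erdos-Renyi
   measure: P(G_{n,p} = G) = p^{e(G)} (1-p)^{binom(n,2) - e(G)}. *)
Definition gnp_prob (R : realType) (n : nat) (p : R) (G : {set {set 'I_n}}) : R :=
  p ^+ #|G| * (1 - p) ^+ (#|KnE n| - #|G|).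

Definition gnp_expect (R : realType) (n : nat) (p : R)
    (X : {set {set 'I_n}} -> R) : R :=
  \sum_(G : {set {set 'I_n}} | G \subset KnE n) gnp_prob p G * X G.

Definition Ym (R : realType) (r n m : nat) (u v : 'I_n) (G : {set {set 'I_n}}) : nat :=
  #|[set F : {set 'I_n} * {set {set 'I_n}} |
      [&& u \in F.1, v \in F.1, F.2 \subset G,
          [forall e in F.2, e \subset F.1], #|F.2| == m
        & (lambda R r * ((#|F.1|)%:R - 2) + 1 <= (m%:R : R))]]|.

(* Main.v *)
Require Import Defs.
From HB Require Import structures.
From mathcomp Require Import all_boot all_order all_algebra.
From mathcomp Require Import all_classical all_reals all_analysis.
From mathcomp Require Import lra ring zify.
Import Order.TTheory GRing.Theory Num.Theory.
Local Open Scope ring_scope.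
Set Warnings "-notation-overridden,-ambiguous-paths,-notation-incompatible-prefix".
Lemma sub_binom (R : comNzRingType) (T : finType) (a b : R) (S : {set T}) :
  \sum_(H : {set T} | H \subset S) a ^+ #|H| * b ^+ (#|S| - #|H|) = (a + b) ^+ #|S|.
Proof.
move: {2}#|S| (erefl #|S|) => k; elim: k S => [|k IH] S hS.
  have S0 : S = finset.set0 by apply/eqP; rewrite -cards_eq0 hS.
  rewrite S0 cards0 (big_pred1 finset.set0); last by move=> H; rewrite finset.subset0.
  by rewrite cards0 !expr0 mulr1.
have [x xS] : exists x, x \in S.
  by apply/card_gt0P; rewrite hS.
have hS' : #|S :\ x| = k by move: hS; rewrite (cardsD1 x S) xS add1n => -[].
rewrite hS. rewrite (bigID (fun H : {set T} => x \in H)) /= addrC.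
have -> : \sum_(H : {set T} | (H \subset S) && (x \notin H)) a ^+ #|H| * b ^+ (k.+1 - #|H|)
   = b * (a + b) ^+ k.
  have := IH _ hS'; rewrite hS' => <-; rewrite mulr_sumr; apply: eq_big => H; first by rewrite subsetD1.
  move=> HS0; have HS' : H \subset S :\ x by rewrite subsetD1.
  have := subset_leq_card HS'; rewrite hS' => hk.
  by rewrite subSn // exprS mulrCA.
rewrite (reindex_onto (fun H => x |: H) (fun H => H :\ x)); last first.
  by move=> H /andP[_ xH]; rewrite finset.setD1K.
have -> : \sum_(H : {set T} | (x |: H \subset S) && (x \in x |: H) && ((x |: H) :\ x == H))
   a ^+ #|x |: H| * b ^+ (k.+1 - #|x |: H|) = a * (a + b) ^+ k.
  have := IH _ hS'; rewrite hS' => <-; rewrite mulr_sumr; apply: eq_big => H.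
    rewrite finset.setU11 andbT subsetD1 finset.subUset finset.sub1set xS /=.
    case xH: (x \in H); last by rewrite finset.setU1K ?xH // eqxx.
    rewrite andbF; apply/negbTE/negP => /andP[_ /eqP e].
    by move: xH; rewrite -e !inE eqxx.
  move=> /andP[_ /eqP hH].
  have xH : x \notin H by rewrite -hH !inE eqxx.
  rewrite cardsU1 xH add1n subSS exprS mulrA //.
by rewrite exprS mulrDl addrC.
Qed.
Lemma sub_marg (R : comNzRingType) (T : finType) (K E : {set T}) (p : R) :
  E \subset K ->
  \sum_(G : {set T} | (G \subset K) && (E \subset G))
     p ^+ #|G| * (1 - p) ^+ (#|K| - #|G|) = p ^+ #|E|.
Proof.
move=> EK.
rewrite (reindex_onto (fun H => E :|: H) (fun G => G :\: E)); last first.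
  move=> G /andP[_ EG]; apply/setP => y; rewrite !inE.
  by case yE: (y \in E) => /=; [rewrite (fintype.subsetP EG y yE) | ].
transitivity (p ^+ #|E| * \sum_(H : {set T} | H \subset K :\: E)
                p ^+ #|H| * (1 - p) ^+ (#|K :\: E| - #|H|)); last first.
  by rewrite sub_binom addrC subrK expr1n mulr1.
rewrite mulr_sumr; apply: eq_big => H.
  rewrite finset.subsetD finset.subUset EK finset.subsetUl /= finset.setDUl finset.setDv finset.set0U.
  by rewrite andbT; congr (_ && _); apply/eqP/idP => /finset.setDidPl.
move=> /andP[_ /eqP]; rewrite finset.setDUl finset.setDv finset.set0U => /finset.setDidPl dHE.
rewrite cardsU (finset.disjoint_setI0 _) 1?disjoint_sym // finset.cards0 subn0.
rewrite cardsDS // exprD -mulrA; congr (_ * (_ * _)); congr (_ ^+ _).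
by rewrite subnDA.
Qed.
Definition S0 (R : realType) (r n m : nat) (u v : 'I_n) :
  {set {set 'I_n} * {set {set 'I_n}}} :=
  [set F : {set 'I_n} * {set {set 'I_n}} |
      [&& u \in F.1, v \in F.1 & (lambda R r * ((#|F.1|)%:R - 2) + 1 <= (m%:R : R))]
      && [&& F.2 \subset KnE n, [forall e in F.2, e \subset F.1] & #|F.2| == m]].

Lemma expect_eq (R : realType) (r n m : nat) (u v : 'I_n) (p : R) :
  @gnp_expect R n p (fun G => ((Ym R r m u v G)%:R : R))
  = \sum_(F in S0 R r n m u v) p ^+ m.
Proof.
rewrite /gnp_expect.
transitivity (\sum_(G : {set {set 'I_n}} | G \subset KnE n) \sum_(F in S0 R r n m u v)
                 gnp_prob p G * ((F.2 \subset G) : nat)%:R).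
  apply: eq_bigr => G GK; rewrite -mulr_sumr; congr (_ * _).
  rewrite /Ym -sum1_card natr_sum.
  transitivity (\sum_(F in S0 R r n m u v | F.2 \subset G) (1:R)).
    apply: eq_bigl => F; rewrite !inE.
    case FG: (F.2 \subset G); rewrite ?andbT ?andbF //=.
    rewrite (fintype.subset_trans FG GK) /=.
    case: (u \in F.1); case: (v \in F.1); case: [forall e in F.2, e \subset F.1];
      case: (#|F.2| == m); case: (lambda R r * _ + 1 <= _); by [].
  by rewrite big_mkcondr; apply: eq_bigr => F _; case: (F.2 \subset G).
rewrite exchange_big /=; apply: eq_bigr => F; rewrite inE => /andP[_ /and3P[FK _ /eqP Fm]].
rewrite -Fm -(@sub_marg _ _ _ _ p FK) big_mkcondr /=; apply: eq_bigr => G _.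
by case: (F.2 \subset G); rewrite ?mulr1 ?mulr0.
Qed.
Lemma sumV (R : realType) (n : nat) (u v : 'I_n) (x : R) : 0 <= x -> u != v ->
  \sum_(V : {set 'I_n} | (u \in V) && (v \in V)) x ^+ (#|V| - 2) <= (1 + x) ^+ n.
Proof.
move=> x0 uv.
rewrite (reindex_onto (fun W => [set u; v] :|: W) (fun V => V :\: [set u; v])); last first.
  move=> V /andP[uV vV]; apply/setP => y; rewrite !inE.
  by case: (eqVneq y u) => [->|_] //=; case: (eqVneq y v) => [->|_] //=; rewrite ?orbF.
have -> : (1 + x) ^+ n = \sum_(W : {set 'I_n} | W \subset [set: 'I_n]) x ^+ #|W| * 1 ^+ (#|[set: 'I_n]| - #|W|).
  by rewrite sub_binom cardsT card_ord addrC.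
rewrite big_mkcond [X in _ <= X]big_mkcond /=; apply: ler_sum => W _.
rewrite finset.subsetT expr1n mulr1.
case: ifP => [/andP[_ /eqP hW] | _]; last by rewrite exprn_ge0.
have dW : [disjoint W & [set u; v]].
  by move: hW; rewrite finset.setDUl finset.setDv finset.set0U => /finset.setDidPl.
rewrite cardsU (finset.disjoint_setI0 _) 1?disjoint_sym // finset.cards0 subn0 cards2 uv.
by rewrite addnC addnK.
Qed.
Lemma countE (n m : nat) (V : {set 'I_n}) :
  #|[set E : {set {set 'I_n}} | [&& E \subset KnE n, [forall e in E, e \subset V] & #|E| == m]]|
  = 'C('C(#|V|, 2), m).
Proof.
rewrite -cards_draws -cards_draws.
apply: eq_card => E; rewrite !inE.
apply/idP/idP.
  move=> /and3P[EK /forall_inP EV ->]; rewrite andbT.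
  apply/fintype.subsetP => e eE; rewrite inE EV //=.
  by have := fintype.subsetP EK e eE; rewrite /KnE inE.
move=> /andP[EP ->]; rewrite andbT; apply/andP; split.
  apply/fintype.subsetP => e eE; have := fintype.subsetP EP e eE.
  by rewrite /KnE !inE => /andP[_ ->].
apply/forall_inP => e eE; have := fintype.subsetP EP e eE.
by rewrite !inE => /andP[-> _].
Qed.
Lemma sum_S0_bound (R : realType) (r n m : nat) (u v : 'I_n) (p c D x : R) :
  0 <= c -> 0 <= D -> 0 <= x -> u != v ->
  (forall F, F \in S0 R r n m u v -> p ^+ m <= c * x ^+ (#|F.1| - 2)) ->
  (forall V : {set 'I_n}, u \in V -> v \in V ->
     lambda R r * ((#|V|)%:R - 2) + 1 <= (m%:R : R) -> ('C('C(#|V|,2), m))%:R <= D) ->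
  \sum_(F in S0 R r n m u v) p ^+ m <= c * (D * (1 + x) ^+ n).
Proof.
move=> c0 D0 x0 uv hp hD.
apply: (@le_trans _ _ (\sum_(F in S0 R r n m u v) c * x ^+ (#|F.1| - 2))).
  by apply: ler_sum => F /hp.
rewrite -mulr_sumr ler_wpM2l //.
have -> : \sum_(F in S0 R r n m u v) x ^+ (#|F.1| - 2) = (\sum_(V : {set 'I_n} | [&& u \in V, v \in V & (lambda R r * ((#|V|)%:R - 2) + 1 <= (m%:R : R))])
   \sum_(E : {set {set 'I_n}} | [&& E \subset KnE n, [forall e in E, e \subset V] & #|E| == m])
      x ^+ (#|V| - 2)).
  by rewrite pair_big_dep; apply: eq_bigl => F; rewrite inE.
apply: (@le_trans _ _ (\sum_(V : {set 'I_n} | [&& u \in V, v \in V & (lambda R r * ((#|V|)%:R - 2) + 1 <= (m%:R : R))])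
   D * x ^+ (#|V| - 2))).
  apply: ler_sum => V /and3P[uV vV lV].
  rewrite sumr_const -mulr_natl ler_wpM2r ?exprn_ge0 //.
  apply: le_trans (hD V uV vV lV); rewrite -countE ler_nat.
  by apply/eq_leq/eq_card => E; rewrite inE.
rewrite -mulr_sumr ler_wpM2l //.
apply: le_trans _ (@sumV _ _ u v x x0 uv).
rewrite [X in X <= _]big_mkcond [X in _ <= X]big_mkcond /=; apply: ler_sum => V _.
case: ifP => [/and3P[-> -> _] // | _]; case: ifP => _ //; exact: exprn_ge0.
Qed.
Lemma ffact_le_exp N m : (N ^_ m <= N ^ m)%N.
Proof.
elim: m => [|m IH]; first by rewrite ffactn0 expn0.
by rewrite ffactnSr expnSr leq_mul // leq_subr.
Qed.

Lemma binom_le (R : realType) N m : (0 < m)%N ->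
  ('C(N, m))%:R <= (expR 1 * N%:R / m%:R : R) ^+ m.
Proof.
case: m => // m _.
have he : (m.+1%:R : R) ^+ m.+1 / (m.+1`!)%:R <= expR 1 ^+ m.+1.
  have := @expR_ge1Dxn R (m.+1)%:R m (ler0n _ _).
  rewrite -[X in expR X]mulr1 expRM_natl => h.
  by apply: le_trans h; rewrite lerDr.
set f : R := (m.+1`!)%:R in he *.
have f0 : 0 < f by rewrite /f ltr0n fact_gt0.
have M0 : 0 < (m.+1%:R : R) ^+ m.+1 by rewrite exprn_gt0 // ltr0n.
have h1 : ('C(N, m.+1))%:R <= (N%:R : R) ^+ m.+1 / f.
  rewrite ler_pdivlMr // /f -natrM bin_ffact -natrX ler_nat.
  exact: ffact_le_exp.
have h2 : f^-1 <= expR 1 ^+ m.+1 / (m.+1%:R : R) ^+ m.+1.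
  rewrite ler_pdivlMr // mulrC; by [].
apply: le_trans h1 _.
rewrite expr_div_n exprMn mulrAC [X in _ <= X]mulrC.
by rewrite ler_wpM2l ?exprn_ge0 ?ler0n // mulrC.
Qed.
Lemma bin2_double k : ('C(k, 2) * 2 = k * k.-1)%N.
Proof.
elim: k => // k IH; rewrite binS bin1 mulnDl IH.
by case: k {IH} => //= k; rewrite mulnC mulnS mulSn; lia.
Qed.

Lemma bin2R (R : realType) k : (('C(k, 2))%:R * 2 : R) = k%:R * (k%:R - 1).
Proof.
case: k => [|k]; first by rewrite bin0n mul0r mul0r.
by rewrite -[2]/(2%:R) -natrM bin2_double /= natrM -natr1 addrK.
Qed.

Lemma lam_facts (R : realType) r : (4 <= r)%N ->
  2 <= lambda R r /\ (('C(r, 2))%:R : R) <= 2 * lambda R r ^+ 2.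
Proof.
move=> hr.
have hs : (4 : R) <= r%:R by rewrite (ler_nat R 4 r).
have hB := bin2R R r.
have hl : lambda R r * (r%:R - 2) = ('C(r, 2))%:R - 2.
  by rewrite /lambda divfK // subr_eq0; apply/negP => /eqP h; move: hs; rewrite h; lra.
move: hB hl; set s : R := r%:R; set B : R := ('C(r, 2))%:R; set l := lambda R r => hB hl.
have s2 : 0 < s - 2 by lra.
have l2 : 2 <= l.
  rewrite -(ler_pM2r s2) hl; nra.
split => //.
have : B * (s - 2) ^+ 2 <= 2 * (l * (s - 2)) ^+ 2.
  rewrite hl.
  have -> : B = s * (s - 1) / 2 by rewrite -hB mulfK.
  have h3 : 0 <= s * (s - 1) * (s - 4) by rewrite !mulr_ge0 //; lra.
  nra.
rewrite exprMn mulrA => h; have q := exprn_gt0 2 s2; nra.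
Qed.
Lemma key_ineq (R : realType) (B l m x : R) : 2 <= l -> B <= 2 * l ^+ 2 -> 0 <= B ->
  0 <= x -> l * x + 1 <= m -> B * ((x + 2) * (x + 1) / 2) <= m * (m + 2 * B).
Proof.
move=> l2 hB B0 x0 hm.
have lx0 : 0 <= l * x by nra.
have h1 : (l * x) ^+ 2 <= (m - 1) ^+ 2 by rewrite ler_sqr ?nnegrE; lra.
have h2 : B * x ^+ 2 <= 2 * (m - 1) ^+ 2.
  have : B * x ^+ 2 <= 2 * l ^+ 2 * x ^+ 2 by rewrite ler_wpM2r // exprn_ge0.
  by rewrite exprMn in h1; lra.
have h3 : B * (2 * x) <= B * (m - 1) by rewrite ler_wpM2l //; nra.
have m1 : 1 <= m by lra.
have h4 : B * (m - 1) <= B * m by rewrite ler_wpM2l //; lra.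
have h5 : (m - 1) ^+ 2 <= m ^+ 2 by rewrite ler_sqr ?nnegrE; lra.
rewrite !expr2 in h2 h5.
nra.
Qed.
Theorem lemma3p8 (R : realType) (r : nat) (hr : (4 <= r)%N) :
  exists C : R, 0 < C /\
  exists n0 : nat, forall (n : nat) (p : R),
    (n0 <= n)%N -> 0 < p ->
    p * powR (n%:R) (1 / lambda R r) * ln (n%:R) <= 1 / (2 * expR 1) ->
    forall (u v : 'I_n), u != v ->
    forall m : nat,
      lambda R r + 1 <= m%:R -> (m%:R : R) <= ('C(r, 2))%:R * ln (n%:R) ->
      @gnp_expect R n p (fun G => ((Ym R r m u v G)%:R : R))
        <= powR ((m%:R + C) / (2 * ('C(r, 2))%:R * ln (n%:R))) (m%:R - lambda R r).
Proof.
have [l2 hBl] := @lam_facts R r hr.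
have B0 : (0 : R) < ('C(r, 2))%:R by rewrite ltr0n bin_gt0 (leq_trans _ hr).
exists (2 * ('C(r, 2))%:R); split; first lra.
exists (Num.truncn (expR (lambda R r + 2))).+1.
move=> n p hn p0 hp u v uv m hm1 hm2.
rewrite expect_eq.
move: l2 hBl B0 hp hm1 hm2.
set l := lambda R r; set B : R := ('C(r, 2))%:R => l2 hBl B0 hp hm1 hm2.
have e0 : 0 < expR 1 :> R by apply: expR_gt0.
have hnR : expR (l + 2) < n%:R.
  apply: lt_le_trans (truncnS_gt _) _; by rewrite ler_nat.
have n0 : (0 : R) < n%:R by apply: lt_trans hnR; apply: expR_gt0.
have n1 : (1 : R) <= n%:R.
  apply: le_trans (ltW hnR); have := expR_ge1Dx (l + 2); lra.
set L := ln n%:R in hp hm2 *.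
have hL : l + 2 <= L.
  rewrite /L -[l + 2]expRK ler_ln ?posrE ?expR_gt0 //; exact: ltW.
have L0 : 0 < L by lra.
set q := powR n%:R (1 / l) in hp *.
have q_ge : expR 1 <= q.
  rewrite /q /powR gt_eqF // ler_expR -/L mul1r.
  rewrite -(ler_pM2l (_ : 0 < l)); last lra.
  by rewrite mulrA mulfV ?mul1r ?mulr1; lra.
have q0 : 0 < q by apply: lt_le_trans q_ge.
have m1 : (1 <= m)%N by rewrite -(ler_nat R); lra.
have hp' : p <= 1 / (2 * expR 1 * L * q).
  rewrite ler_pdivlMr; last by rewrite !mulr_gt0.
  move: hp; rewrite ler_pdivlMr; last by rewrite mulr_gt0.
  by move=> h; apply: le_trans _ h; rewrite le_eqVlt; apply/orP; left; apply/eqP; ring.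
set c := (1 / (2 * expR 1 * L)) ^+ m / q.
set D := (expR 1 * (m%:R + 2 * B) / B) ^+ m.
set x := (n%:R : R)^-1.
have c0 : 0 <= c.
  rewrite /c; apply: divr_ge0 (ltW q0); apply: exprn_ge0; apply: ltW.
  by rewrite divr_gt0 // !mulr_gt0.
have mge0 : (0 : R) <= m%:R by apply: ler0n.
have D0 : 0 <= D.
  rewrite /D; apply: exprn_ge0; apply: divr_ge0 (ltW B0); apply: mulr_ge0 (ltW e0) _; lra.
have x0 : 0 <= x by rewrite /x invr_ge0 ltW.
have := @sum_S0_bound R r n m u v p c D x c0 D0 x0 uv.
have A0 : 0 < 1 / (2 * expR 1 * L) by apply: divr_gt0 => //; rewrite !mulr_gt0.
have hF : forall F, F \in S0 R r n m u v -> p ^+ m <= c * x ^+ (#|F.1| - 2).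
  move=> F; rewrite inE => /andP[/and3P[uF vF lF] _].
  move: lF; set k := #|F.1| => lF.
  have hk : (2 <= k)%N.
    have sub : [set u; v] \subset F.1.
      by apply/fintype.subsetP => y; rewrite !inE => /orP[/eqP->|/eqP->].
    by have := subset_leq_card sub; rewrite cards2 uv.
  have lk : l * (k - 2)%:R + 1 <= m%:R by rewrite natrB.
  have qm : q ^+ m = q * q ^+ (m - 1) by rewrite -{1}(subnK m1) exprD expr1 mulrC.
  have nq : (n%:R : R) ^+ (k - 2) <= q ^+ (m - 1).
    rewrite /q -!powR_mulrn ?powR_ge0 ?ler0n // -powRrM; apply: (ler_powR n1).
    rewrite mul1r mulrC ler_pdivlMr; last lra.
    rewrite [(m - 1)%:R]natrB //; lra.
  apply: (@le_trans _ _ ((1 / (2 * expR 1 * L * q)) ^+ m)).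
    have pos : 0 < 1 / (2 * expR 1 * L * q) by apply: divr_gt0 => //; rewrite !mulr_gt0.
    by apply: lerXn2r; rewrite ?nnegrE; [exact: ltW | exact: ltW | exact: hp'].
  have -> : (1 / (2 * expR 1 * L * q)) ^+ m = (1 / (2 * expR 1 * L)) ^+ m * (q ^+ m)^-1.
    rewrite -exprVn -exprMn; congr (_ ^+ _); field.
    by apply/and3P; split; apply: lt0r_neq0.
  rewrite /c /x exprVn -(mulrA _ q^-1) ler_pM2l ?exprn_gt0 //.
  rewrite -invfM lef_pV2 ?posrE ?exprn_gt0 ?mulr_gt0 ?exprn_gt0 //.
  by rewrite qm ler_pM2l.
have hDV : forall V : {set 'I_n}, u \in V -> v \in V ->
     l * ((#|V|)%:R - 2) + 1 <= (m%:R : R) -> ('C('C(#|V|,2), m))%:R <= D.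
  move=> V uV vV; set kk := #|V| => lV.
  have hk : (2 <= kk)%N.
    have sub : [set u; v] \subset V.
      by apply/fintype.subsetP => y; rewrite !inE => /orP[/eqP->|/eqP->].
    by have := subset_leq_card sub; rewrite cards2 uv.
  apply: le_trans (binom_le R ('C(kk, 2)) m m1) _.
  have m0 : (0 : R) < m%:R by rewrite ltr0n.
  have N0 : (0 : R) <= ('C(kk, 2))%:R by apply: ler0n.
  rewrite /D; apply: lerXn2r; rewrite ?nnegrE.
  - by apply: divr_ge0; [apply: mulr_ge0 => //; apply: ltW | apply: ltW].
  - by apply: divr_ge0; [apply: mulr_ge0; [apply: ltW | lra] | apply: ltW].
  rewrite -!mulrA ler_pM2l // ler_pdivrMr // mulrAC ler_pdivlMr //.
  have hk2 : (2 : R) <= kk%:R by rewrite (ler_nat R 2 kk).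
  have := @key_ineq R B l m%:R (kk%:R - 2) l2 hBl (ltW B0) ltac:(lra) lV.
  have h := bin2R R kk.
  have hN : ('C(kk, 2))%:R = kk%:R * (kk%:R - 1) / 2 :> R by rewrite -h mulfK.
  rewrite hN => hh; nra.
move=> /(_ hF hDV) hS.
have hx : (1 + x) ^+ n <= expR 1.
  apply: (@le_trans _ _ (expR x ^+ n)).
    apply: lerXn2r; rewrite ?nnegrE ?expR_ge0 //; first lra.
    exact: expR_ge1Dx.
  by rewrite -expRM_natl /x mulfV ?gt_eqF.
apply: le_trans hS _.
have hcD : c * (D * (1 + x) ^+ n) <= c * (D * expR 1) by rewrite ler_wpM2l // ler_wpM2l.
apply: le_trans hcD _.
set base := (m%:R + 2 * B) / (2 * B * L).
have hb : base = 1 / (2 * expR 1 * L) * (expR 1 * (m%:R + 2 * B) / B).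
  rewrite /base; field.
  by apply/and3P; split; apply: lt0r_neq0.
have eq1 : c * (D * expR 1) = base ^+ m * (expR 1 / q).
  rewrite hb exprMn /c /D; field.
  exact: lt0r_neq0.
rewrite eq1.
have b0 : 0 < base by apply: divr_gt0; [lra | rewrite !mulr_gt0].
have BL : 2 * B <= B * L by nra.
have b1 : base <= 1 by rewrite /base ler_pdivrMr ?mul1r ?mulr_gt0 //; lra.
have hq : expR 1 / q <= 1 by rewrite ler_pdivrMr // mul1r.
apply: (@le_trans _ _ (base ^+ m)).
  by rewrite -[X in _ <= X]mulr1 ler_wpM2l // exprn_ge0 // ltW.
rewrite -(powR_mulrn _ (ltW b0)).
have bb : 0 < base <= 1 by rewrite b0 b1.
apply: (ger_powR bb).
lra.
Qed.
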